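(* For every integer $n\ge4$, $\mathcal D(n)>\mathcal P(n)$, where $\mathcal D(n)=2^4\cdot3^{(n-4)/2}$ for $n$ even, $\mathcal D(n)=2^5\cdot3^{(n-5)/2}$ for $n$ odd, and $\mathcal P(n)$ is the number of unordered pairs $\{\xi,\eta\}$ of partitions with $|\xi|+|\eta|=n$, where each pair with $\xi=\eta$ is counted twice (i.e. $\mathcal P(n)$ is the number of irreducible complex representations of the Weyl group of type $D_n$). *)

(* Defs.v *)
From mathcomp Require Import all_boot.
Set Implicit Arguments. Unset Strict Implicit. Unset Printing Implicit Defensive.

Definition is_partition (s : seq nat) : bool :=
  sorted geq s && all (fun x => 0 < x) s.

Definition psize (s : seq nat) : nat := sumn s.

Fixpoint allseq (b l : nat) : seq (seq nat) :=
  match l with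
  | 0 => [:: [::]]
  | l'.+1 => [::] :: [seq x :: s | x <- iota 0 b.+1, s <- allseq b l']
  end.

(* The list of all partitions of size k (every partition of k has at most
   k parts, each at most k, so it occurs in allseq k k). *)
Definition partitions (k : nat) : seq (seq nat) :=
  [seq s <- allseq k k | is_partition s && (psize s == k)].

Definition ordered_pairs (n : nat) : seq (seq nat * seq nat) :=
  flatten [seq [seq (x, y) | x <- partitions k, y <- partitions (n - k)]
           | k <- iota 0 n.+1].

(* Unordered pairs {xi, eta}: each unordered pair is represented by the
   first of (xi,eta), (eta,xi) occurring in the (duplicate-free) list of
   ordered pairs. *)
Definition unordered_pairs (n : nat) : seq (seq nat * seq nat) :=
  let L := ordered_pairs n in
  [seq p <- L | index p L <= index (p.2, p.1) L].

Definition calP (n : nat) : nat :=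
  \sum_(p <- unordered_pairs n) (if p.1 == p.2 then 2 else 1).

Definition calD (n : nat) : nat :=
  if odd n then 2 ^ 5 * 3 ^ ((n - 5) %/ 2) else 2 ^ 4 * 3 ^ ((n - 4) %/ 2).

(* Main.v *)
Require Import Defs.
From mathcomp Require Import all_boot zify.
Set Implicit Arguments. Unset Strict Implicit. Unset Printing Implicit Defensive.

Lemma allseq_S b l : allseq b l.+1 = [::] :: [seq x :: s | x <- iota 0 b.+1, s <- allseq b l].
Proof. by []. Qed.

Lemma allseq_uniq b l : uniq (allseq b l).
Proof.
elim: l => [|l IH] //; rewrite allseq_S cons_uniq.
apply/andP; split.
  by apply/negP => /allpairsP [[x s] []].
apply: allpairs_uniq => //; first exact: iota_uniq.
by move=> [x s] [y t] _ _ /= [-> ->].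
Qed.

Lemma mem_allseq b l s : size s <= l -> all (fun x => x <= b) s -> s \in allseq b l.
Proof.
elim: l s => [|l IH] [|x s] //; rewrite allseq_S // => Hs /andP [Hx Ha].
rewrite inE; apply/orP; right.
apply/allpairsP; exists (x, s); split => //.
  by rewrite mem_iota.
by apply: IH.
Qed.

Lemma size_le_sumn s : all (fun x => 0 < x) s -> size s <= sumn s.
Proof. elim: s => //= x s IH /andP [Hx Ha]; have := IH Ha; lia. Qed.

Lemma all_le_sumn s : all (fun x => x <= sumn s) s.
Proof.
elim: s => //= x s IH; apply/andP; split; first exact: leq_addr.
apply/allP => y Hy; have := allP IH y Hy; lia.
Qed.

Lemma partitions_uniq k : uniq (partitions k).
Proof. exact/filter_uniq/allseq_uniq. Qed.

Lemma mem_partitions k s : (s \in partitions k) = is_partition s && (psize s == k).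
Proof.
rewrite mem_filter; case H: (is_partition s && (psize s == k)) => //=.
move/andP: H => [/andP [_ Hp] /eqP Hk].
apply: mem_allseq; first by rewrite -Hk; exact: size_le_sumn.
by rewrite -Hk; exact: all_le_sumn.
Qed.

Definition incrh (s : seq nat) := if s is x :: t then x.+1 :: t else s.

Fixpoint C3 (k : nat) : seq (seq nat) :=
  match k with
  | 0 => [:: [::]]
  | 1 => [::]
  | 2 => [::]
  | S ((S (S k')) as k2) => map incrh (C3 k2) ++ map (cons 3) (C3 k')
  end.

Fixpoint E (k : nat) : seq (seq nat) :=
  match k with
  | 0 => C3 0
  | k'.+1 => map (cons 1) (E k') ++ C3 k'.+1
  end.

Fixpoint A (k : nat) : seq (seq nat) :=
  match k with
  | 0 => E 0
  | 1 => E 1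
  | k'.+2 => map (cons 2) (A k') ++ E k'.+2
  end.

Lemma C3_S k : C3 k.+3 = map incrh (C3 k.+2) ++ map (cons 3) (C3 k).
Proof. by []. Qed.

Lemma mem_C3 c : all (fun x => 2 < x) c -> c \in C3 (sumn c).
Proof.
move Hn: (sumn c) => n; elim/ltn_ind: n c Hn => n IH [|x t] /=.
  by move=> <-.
move=> Hn /andP [Hx Ht].
case: (ltngtP x 3) => Hx3; first lia.
- have -> : n = (n - 4).+1.+3 by lia.
  rewrite C3_S mem_cat; apply/orP; left.
  have -> : x :: t = incrh (x.-1 :: t) by case: x Hx Hx3 {Hn} => //.
  apply: map_f; have -> : (n - 4).+3 = sumn (x.-1 :: t) by rewrite /=; lia.
  apply: (IH _ _ _ erefl) => /=; [lia|]; rewrite Ht andbT; lia.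
- subst x; have -> : n = (sumn t).+3 by lia.
  rewrite C3_S mem_cat; apply/orP; right; apply: map_f.
  apply: (IH _ _ _ erefl) => //; lia.
Qed.

Lemma C3_sub_E k : {subset C3 k <= E k}.
Proof. by case: k => [|k] //= c Hc; rewrite mem_cat Hc orbT. Qed.

Lemma E_sub_A k : {subset E k <= A k}.
Proof. by case: k => [|[|k]] //= c Hc; rewrite mem_cat Hc orbT. Qed.

Lemma mem_E i c : all (fun x => 2 < x) c -> nseq i 1 ++ c \in E (i + sumn c).
Proof.
move=> Hc; elim: i => [|i IH] /=.
  exact/C3_sub_E/mem_C3.
by rewrite mem_cat map_f.
Qed.

Lemma mem_A j k w : w \in E k -> nseq j 2 ++ w \in A (j.*2 + k).
Proof.
move=> Hw; elim: j => [|j IH]; first exact: E_sub_A.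
have -> : j.+1.*2 + k = (j.*2 + k).+2 by rewrite doubleS.
by rewrite [A _]/= mem_cat [nseq _ _ ++ _]/= map_f.
Qed.

Definition enc (s : seq nat) : seq nat :=
  nseq (count_mem 2 s) 2 ++ (nseq (count_mem 1 s) 1 ++ filter (fun x => 2 < x) s).

Lemma sumn_split s : all (fun x => 0 < x) s ->
  sumn s = (count_mem 2 s).*2 + (count_mem 1 s + sumn (filter (fun x => 2 < x) s)).
Proof.
elim: s => //= x s IH /andP [Hx Ha]; rewrite (IH Ha).
by case: x Hx => [|[|[|x]]] //= _; lia.
Qed.

Lemma enc_mem s : is_partition s -> enc s \in A (psize s).
Proof.
move=> /andP [_ Hp]; rewrite /psize (sumn_split Hp) /enc.
apply: mem_A; apply: mem_E; exact: filter_all.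
Qed.

Lemma count_big v s : count (predI (pred1 v) (fun x => 2 < x)) s = if 2 < v then count_mem v s else 0.
Proof.
case: ifP => Hv.
  by apply: eq_count => x /=; case: eqP => // ->; rewrite Hv.
by rewrite (eq_count (a2 := pred0)) ?count_pred0 // => x /=; case: eqP => // ->; rewrite Hv.
Qed.

Lemma count_enc v s : 0 < v -> count_mem v (enc s) = count_mem v s.
Proof.
move=> Hv; rewrite /enc !count_cat !count_nseq count_filter count_big.
case: v Hv => [|[|[|v]]] Hv.
- by [].
- by rewrite [pred1 1 2]/= [pred1 1 1]/= mul0n mul1n addn0.
- by rewrite [pred1 2 2]/= [pred1 2 1]/= mul0n mul1n addn0.
- rewrite [pred1 v.+3 2]/= [pred1 v.+3 1]/= [2 < v.+3]/= mul0n mul0n add0n add0n.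
  by [].
Qed.

Lemma filter_enc s : filter (fun x => 2 < x) (enc s) = filter (fun x => 2 < x) s.
Proof.
rewrite /enc !filter_cat filter_id.
have H2 : forall n, filter (fun x => 2 < x) (nseq n 2) = [::] by elim.
have H1 : forall n, filter (fun x => 2 < x) (nseq n 1) = [::] by elim.
by rewrite H1 H2.
Qed.

Lemma count_pos0 s : all (fun x => 0 < x) s -> count_mem 0 s = 0.
Proof. by elim: s => //= x s IH /andP [Hx Ha]; rewrite IH //; case: x Hx. Qed.

Lemma enc_inj : {in [pred s | is_partition s] &, injective enc}.
Proof.
move=> s1 s2; rewrite !inE => /andP [S1 P1] /andP [S2 P2] He.
apply: (sorted_eq (leT := geq)) => //.
- by move=> x y z /= H1 H2; exact: leq_trans H2 H1.
- by move=> x y /= /andP [H1 H2]; apply/anti_leq; rewrite H1 H2.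
rewrite /perm_eq; apply/allP => x _; apply/eqP.
case: x => [|x]; first by rewrite !count_pos0.
by have := @count_enc x.+1 s1 erefl; rewrite He (@count_enc x.+1 s2 erefl) => <-.
Qed.

Lemma size_partitions k : size (partitions k) <= size (A k).
Proof.
rewrite -(size_map enc); apply: uniq_leq_size.
  rewrite map_inj_in_uniq; first exact: partitions_uniq. move=> s1 s2.
  by rewrite !mem_partitions => /andP [H1 _] /andP [H2 _]; apply: enc_inj.
move=> w /mapP [s]; rewrite mem_partitions => /andP [Hp /eqP <-] ->.
exact: enc_mem.
Qed.

Lemma mem_op n x y : ((x, y) \in ordered_pairs n) =
  [&& is_partition x, is_partition y & psize x + psize y == n].
Proof.
rewrite /ordered_pairs; apply/idP/idP.
  move=> /flattenP [t /mapP [k Hk ->] /allpairsP [[a b] [/= Ha Hb [-> ->]]]].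
  move: Ha Hb; rewrite !mem_partitions => /andP [-> /eqP Ha] /andP [-> /eqP Hb] /=.
  move: Hk; rewrite mem_iota Ha Hb => Hk; apply/eqP; lia.
move=> /and3P [Hx Hy /eqP Hn]; apply/flattenP.
exists [seq (a, b) | a <- partitions (psize x), b <- partitions (n - psize x)].
  apply/mapP; exists (psize x) => //; rewrite mem_iota; lia.
apply/allpairsP; exists (x, y); split => //=; rewrite mem_partitions ?Hx ?Hy //=.
apply/eqP; lia.
Qed.

Lemma uniq_flatten_key (T I : eqType) (key : T -> I) (F : I -> seq T) (s : seq I) :
  uniq s -> (forall i, uniq (F i)) -> (forall i x, x \in F i -> key x = i) ->
  uniq (flatten (map F s)).
Proof.
move=> Hs HF Hk; elim: s Hs => //= i s IH /andP [Hi Hs].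
rewrite cat_uniq HF IH // andbT; apply/hasPn => x Hx /=; apply/negP => H.
move: Hx => /flattenP [t /mapP [j Hj ->]] Hxj.
have E1 := Hk _ _ Hxj; have E2 := Hk _ _ H.
by move: Hi; rewrite -E2 E1 Hj.
Qed.

Lemma op_uniq n : uniq (ordered_pairs n).
Proof.
apply: (@uniq_flatten_key _ _ (fun p : seq nat * seq nat => psize p.1)).
- exact: iota_uniq.
- move=> k; apply: allpairs_uniq; try exact: partitions_uniq.
  by move=> [a b] [c d] _ _ /= [-> ->].
- move=> k p /allpairsP [[a b] [/= Ha _ ->]] /=.
  by move: Ha; rewrite mem_partitions => /andP [_ /eqP].
Qed.

Definition sw (p : seq nat * seq nat) := (p.2, p.1).

Lemma swK : involutive sw. Proof. by case. Qed.

Lemma op_sw n p : (sw p \in ordered_pairs n) = (p \in ordered_pairs n).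
Proof. case: p => x y; rewrite /sw /= !mem_op; by rewrite andbCA addnC. Qed.

Lemma sum_w (T : Type) (f dg : pred T) (s : seq T) :
  \sum_(p <- s | f p) (if dg p then 2 else 1) = count f s + count (predI f dg) s.
Proof.
elim: s => [|x s IH]; first by rewrite big_nil.
rewrite big_cons IH /=; case: (f x); case: (dg x) => /=; lia.
Qed.

Lemma count_splitI (T : Type) (a b : pred T) (s : seq T) :
  count a s = count (predI a b) s + count (predI a (predC b)) s.
Proof. elim: s => //= x s ->; case: (a x); case: (b x) => /=; lia. Qed.

Lemma count_splitI2 (T : Type) (a b : pred T) (s : seq T) :
  count b s = count (predI a b) s + count (predI (predC a) b) s.
Proof. elim: s => //= x s ->; case: (a x); case: (b x) => /=; lia. Qed.

Lemma calP_eq n : let L := ordered_pairs n in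
  2 * calP n = size L + 3 * count (fun p : seq nat * seq nat => p.1 == p.2) L.
Proof.
move=> L; rewrite /calP /unordered_pairs -/L big_filter sum_w.
set f := (fun p : seq nat * seq nat => index p L <= index (p.2, p.1) L).
set dg := (fun p : seq nat * seq nat => p.1 == p.2).
have Hb : count (predI f dg) L = count dg L.
  apply: eq_in_count => [[x y]] _ /=; rewrite /f /dg /=.
  by case: eqP => [->|_]; rewrite ?leqnn ?andbF.
have Hperm : perm_eq L (map sw L).
  apply: uniq_perm; first exact: op_uniq.
    by rewrite (map_inj_uniq (inv_inj swK)) op_uniq.
  move=> p; apply/idP/mapP.
    by move=> Hp; exists (sw p); rewrite ?swK // op_sw.
  by move=> [q Hq ->]; rewrite op_sw.
have Hd : count (predI f (predC dg)) L = count (predI (predC f) (predC dg)) L.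
  rewrite (permP Hperm) count_map; apply: eq_in_count => [[x y]] Hp.
  rewrite /dg /f /sw /=; case: (x =P y) => [->|Hne]; first by rewrite !eqxx !andbF.
  rewrite (_ : (y == x) = false); last by apply/eqP => Hyx; apply: Hne.
  rewrite !andbT.
  have Hsw : (y, x) \in L by rewrite (op_sw n (x, y)).
  have Hi : index (x, y) L != index (y, x) L.
    apply/negP => /eqP Hi; apply: Hne.
    by have := nth_index (x, y) Hp; rewrite Hi nth_index // => -[].
  by rewrite leqNgt ltn_neqAle Hi.
have H1 := count_splitI f dg L.
have H2 := count_splitI2 f (predC dg) L.
have H3 := count_predC dg L.
rewrite Hb in H1 *; lia.
Qed.

Definition sa k := size (A k).

Lemma sumn_map_le (f g : nat -> nat) s : (forall x, f x <= g x) ->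
  sumn (map f s) <= sumn (map g s).
Proof. by move=> H; elim: s => //= x s IH; apply: leq_add. Qed.

Lemma size_op n : size (ordered_pairs n) =
  sumn [seq size (partitions k) * size (partitions (n - k)) | k <- iota 0 n.+1].
Proof.
rewrite /ordered_pairs size_flatten /shape -map_comp; congr sumn.
by apply: eq_map => k /=; rewrite size_allpairs.
Qed.

Lemma count_dg n : count (fun p : seq nat * seq nat => p.1 == p.2) (ordered_pairs n)
  <= size (partitions n./2).
Proof.
rewrite -size_filter -(size_map fst); apply: uniq_leq_size.
  rewrite map_inj_in_uniq; first exact/filter_uniq/op_uniq.
  move=> [a b] [c d]; rewrite !mem_filter /= => /andP [/eqP <- _] /andP [/eqP <- _] ->.
  by [].
move=> x /mapP [[a b]]; rewrite mem_filter /= => /andP [/eqP <- Hm] ->.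
move: Hm; rewrite mem_op mem_partitions => /and3P [-> _ /eqP Hn] /=.
by rewrite -Hn addnn doubleK.
Qed.

Lemma calP_bound n : 2 * calP n <= sumn [seq sa k * sa (n - k) | k <- iota 0 n.+1] + 3 * sa n./2.
Proof.
rewrite calP_eq size_op; apply: leq_add.
  by apply: sumn_map_le => k; apply: leq_mul; apply: size_partitions.
by rewrite leq_mul2l /=; apply: leq_trans (count_dg n) (size_partitions _).
Qed.

Lemma sC3S k : size (C3 k.+3) = size (C3 k.+2) + size (C3 k).
Proof. by rewrite C3_S size_cat !size_map. Qed.
Lemma sES k : size (E k.+1) = size (E k) + size (C3 k.+1).
Proof. by rewrite /= size_cat size_map. Qed.
Lemma sAS k : sa k.+2 = sa k + size (E k.+2).
Proof. by rewrite /sa /= size_cat size_map. Qed.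

Lemma C3_bound k : 2 ^ k * size (C3 k) <= 3 ^ k.
Proof.
suff H : forall k, [/\ 2 ^ k * size (C3 k) <= 3 ^ k,
   2 ^ k.+1 * size (C3 k.+1) <= 3 ^ k.+1 & 2 ^ k.+2 * size (C3 k.+2) <= 3 ^ k.+2].
  by case: (H k).
clear k.
elim=> [|k [H0 H1 H2]]; first by [].
split=> //; rewrite sC3S.
have e1 : 2 ^ k.+3 = 2 * 2 ^ k.+2 by rewrite expnS.
have e2 : 2 ^ k.+3 = 8 * 2 ^ k by rewrite !expnS !mulnA.
have e3 : 3 ^ k.+3 = 3 * 3 ^ k.+2 by rewrite expnS.
have e4 : 3 ^ k.+3 = 27 * 3 ^ k by rewrite !expnS !mulnA.
rewrite mulnDr; move: H0 H2 e1 e2 e3 e4.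
move: (2 ^ k) (2 ^ k.+2) (2 ^ k.+3) (3 ^ k) (3 ^ k.+2) (3 ^ k.+3) (size (C3 k)) (size (C3 k.+2)).
move=> a b c d e f x y; nia.
Qed.

Lemma E_bound k : 2 ^ k * size (E k) <= 3 ^ k.+1.
Proof.
elim: k => [|k IH]; first by [].
rewrite sES mulnDr.
have := C3_bound k.+1.
have e1 : 2 ^ k.+1 = 2 * 2 ^ k by rewrite expnS.
have e3 : 3 ^ k.+2 = 3 * 3 ^ k.+1 by rewrite expnS.
move: IH e1 e3; move: (2 ^ k) (2 ^ k.+1) (3 ^ k.+1) (3 ^ k.+2) (size (E k)) (size (C3 k.+1)).
move=> a b c d x y; nia.
Qed.

Lemma A_bound k : 5 * 2 ^ k * sa k <= 3 ^ k.+3.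
Proof.
suff H : forall k, 5 * 2 ^ k * sa k <= 3 ^ k.+3 /\ 5 * 2 ^ k.+1 * sa k.+1 <= 3 ^ k.+4.
  by case: (H k).
clear k.
elim=> [|k [H0 H1]]; first by [].
split=> //; rewrite sAS.
have := E_bound k.+2.
have e1 : 2 ^ k.+2 = 4 * 2 ^ k by rewrite !expnS !mulnA.
have e3 : 3 ^ (k.+3).+2 = 9 * 3 ^ k.+3 by rewrite !expnS !mulnA.
move: H0 e1 e3; move: (2 ^ k) (2 ^ k.+2) (3 ^ k.+3) (3 ^ (k.+3).+2) (sa k) (size (E k.+2)).
move=> a b c d x y; nia.
Qed.

From Stdlib Require Import NArith.

Lemma N_add a b : N.of_nat (a + b) = (N.of_nat a + N.of_nat b)%N.
Proof. exact: Nat2N.inj_add. Qed.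
Lemma N_mul a b : N.of_nat (a * b) = (N.of_nat a * N.of_nat b)%N.
Proof. exact: Nat2N.inj_mul. Qed.
Lemma N_exp a b : N.of_nat (a ^ b) = (N.of_nat a ^ N.of_nat b)%N.
Proof.
elim: b => [|b IH]; first by [].
by rewrite expnS N_mul IH Nat2N.inj_succ N.pow_succ_r' .
Qed.
Lemma ltN a b : (N.of_nat a <? N.of_nat b)%N = true -> a < b.
Proof. move/N.ltb_lt => H; apply/ltP; apply/PeanoNat.Nat.compare_lt_iff; rewrite Nat2N.inj_compare; exact: H. Qed.

Lemma N_mulexp a b c : N.of_nat (a * b ^ c) = (N.of_nat a * N.of_nat b ^ N.of_nat c)%N.
Proof. by rewrite N_mul N_exp. Qed.

Lemma ltN_me a b c d e f :
  (N.of_nat a * N.of_nat b ^ N.of_nat c <? N.of_nat d * N.of_nat e ^ N.of_nat f)%N = true ->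
  a * b ^ c < d * e ^ f.
Proof. by move=> H; apply: ltN; rewrite !N_mulexp. Qed.

Lemma base_even : 48 * 3 ^ 31 < 2 ^ 9 * 25 * 4 ^ 21.
Proof. exact: (@ltN_me 48 3 31 (2 ^ 9 * 25) 4 21 (refl_equal true)). Qed.
Lemma base_odd : 49 * 3 ^ 32 < 2 ^ 11 * 25 * 4 ^ 21.
Proof. exact: (@ltN_me 49 3 32 (2 ^ 11 * 25) 4 21 (refl_equal true)). Qed.

Lemma exp23 e : 2 ^ e <= 3 ^ e.
Proof. by elim: e => // e IH; rewrite !expnS leq_mul. Qed.

Lemma even_ineq q : 21 <= q -> (2 * q + 6) * 3 ^ (q + 10) < 2 ^ 9 * 25 * 4 ^ q.
Proof.
move=> Hq; rewrite -(subnK Hq); elim: (q - 21) => [|d IH].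
  exact: base_even.
have e1 : 3 ^ (d.+1 + 21 + 10) = 3 * 3 ^ (d + 21 + 10) by rewrite -expnS.
have e2 : 4 ^ (d.+1 + 21) = 4 * 4 ^ (d + 21) by rewrite -expnS.
rewrite e1 e2; move: IH; move: (3 ^ (d + 21 + 10)) (4 ^ (d + 21)) (2 ^ 9 * 25) => x y z; nia.
Qed.

Lemma odd_ineq q : 21 <= q -> (2 * q + 7) * 3 ^ (q + 11) < 2 ^ 11 * 25 * 4 ^ q.
Proof.
move=> Hq; rewrite -(subnK Hq); elim: (q - 21) => [|d IH].
  exact: base_odd.
have e1 : 3 ^ (d.+1 + 21 + 11) = 3 * 3 ^ (d + 21 + 11) by rewrite -expnS.
have e2 : 4 ^ (d.+1 + 21) = 4 * 4 ^ (d + 21) by rewrite -expnS.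
rewrite e1 e2; move: IH; move: (3 ^ (d + 21 + 11)) (4 ^ (d + 21)) (2 ^ 11 * 25) => x y z; nia.
Qed.

Definition Sn n := sumn [seq sa k * sa (n - k) | k <- iota 0 n.+1] + 3 * sa n./2.

Lemma term_bound n k : k <= n -> 25 * 2 ^ n * (sa k * sa (n - k)) <= 3 ^ (n + 6).
Proof.
move=> Hk.
have e1 : 2 ^ n = 2 ^ k * 2 ^ (n - k) by rewrite -expnD subnKC.
have e2 : 3 ^ (n + 6) = 3 ^ k.+3 * 3 ^ (n - k).+3 by rewrite -expnD; congr (_ ^ _); lia.
have h1 := A_bound k; have h2 := A_bound (n - k).
rewrite e1 e2; move: h1 h2.
move: (2 ^ k) (2 ^ (n - k)) (3 ^ k.+3) (3 ^ (n - k).+3) (sa k) (sa (n - k)) => a b c d x y.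
move=> h1 h2; have := leq_mul h1 h2; nia.
Qed.

Lemma sum_bound n s : all (fun k => k <= n) s ->
  25 * 2 ^ n * sumn [seq sa k * sa (n - k) | k <- s] <= size s * 3 ^ (n + 6).
Proof.
elim: s => [|k s IH] /=; first by rewrite muln0.
move=> /andP [Hk Hs]; rewrite mulnDr mulSn; apply: leq_add; last exact: IH.
exact: term_bound.
Qed.

Lemma half_bound n : 25 * 2 ^ n * (3 * sa n./2) <= 3 ^ (n + 6).
Proof.
set m := n./2.
have Hm : m <= n by rewrite /m -divn2 leq_div.
have e1 : 2 ^ n = 2 ^ m * 2 ^ (n - m) by rewrite -expnD subnKC.
have e2 : 3 ^ (n + 6) = 27 * 3 ^ (n - m) * 3 ^ m.+3.
  by rewrite -[27]/(3 ^ 3) -!expnD; congr (_ ^ _); lia.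
have h1 := A_bound m; have h2 := exp23 (n - m).
rewrite e1 e2; move: h1 h2.
move: (2 ^ m) (2 ^ (n - m)) (3 ^ (n - m)) (3 ^ m.+3) (sa m) => a b c d x.
move=> h1 h2; have := leq_mul h1 h2; nia.
Qed.

Lemma Sn_bound n : 25 * 2 ^ n * Sn n <= (n + 2) * 3 ^ (n + 6).
Proof.
rewrite /Sn mulnDr (_ : n + 2 = size (iota 0 n.+1) + 1); last by rewrite size_iota addn1 addnS addn1.
rewrite mulnDl mul1n; apply: leq_add; last exact: half_bound.
apply: sum_bound; apply/allP => k; rewrite mem_iota; lia.
Qed.

Lemma exp4 q : 2 ^ (q * 2) = 4 ^ q.
Proof. by rewrite mulnC expnM. Qed.

Lemma large_ineq n : 46 <= n -> (n + 2) * 3 ^ (n + 6) < 50 * 2 ^ n * calD n.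
Proof.
move=> Hn; have := odd_double_half n; rewrite -muln2 /calD.
set m := n./2; case: (odd n) => /= Hm.
- have Hq : (n - 5) %/ 2 = m - 2.
    by rewrite (_ : n - 5 = (m - 2) * 2) ?mulnK //; lia.
  rewrite Hq; set q := m - 2.
  have En : n = q * 2 + 5 by rewrite /q; lia.
  have H := odd_ineq (q := q) ltac:(rewrite /q; lia).
  have e1 : 3 ^ (n + 6) = 3 ^ (q + 11) * 3 ^ q by rewrite -expnD En; congr (_ ^ _); lia.
  have e2 : 2 ^ n = 32 * 4 ^ q by rewrite En expnD exp4 mulnC.
  have X0 : 0 < 3 ^ q by rewrite expn_gt0.
  rewrite e1 e2 En; move: H X0.
  move: (3 ^ (q + 11)) (3 ^ q) (4 ^ q) => a x b H X0.
  rewrite (_ : 2 ^ 5 = 32) // (_ : 2 ^ 11 = 2048) // in H *; nia.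
- have Hq : (n - 4) %/ 2 = m - 2.
    by rewrite (_ : n - 4 = (m - 2) * 2) ?mulnK //; lia.
  rewrite Hq; set q := m - 2.
  have En : n = q * 2 + 4 by rewrite /q; lia.
  have H := even_ineq (q := q) ltac:(rewrite /q; lia).
  have e1 : 3 ^ (n + 6) = 3 ^ (q + 10) * 3 ^ q by rewrite -expnD En; congr (_ ^ _); lia.
  have e2 : 2 ^ n = 16 * 4 ^ q by rewrite En expnD exp4 mulnC.
  have X0 : 0 < 3 ^ q by rewrite expn_gt0.
  rewrite e1 e2 En; move: H X0.
  move: (3 ^ (q + 10)) (3 ^ q) (4 ^ q) => a x b H X0.
  rewrite (_ : 2 ^ 4 = 16) // (_ : 2 ^ 9 = 512) // in H *; nia.
Qed.

Lemma large n : 46 <= n -> Sn n < 2 * calD n.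
Proof.
move=> Hn; have H1 := Sn_bound n; have H2 := large_ineq Hn.
have P : 0 < 25 * 2 ^ n by rewrite muln_gt0 expn_gt0.
rewrite -(ltn_pmul2l P); apply: leq_ltn_trans H1 _.
by rewrite mulnA (_ : 25 * 2 ^ n * 2 = 50 * 2 ^ n) // mulnAC.
Qed.

Definition tup := (N * N * N * N * N * N * N)%type.
Definition stepN (t : tup) : tup :=
  let '(c0, c1, c2, e0, e1, a0, a1) := t in (c1, c2, c2 + c0, e1, e1 + c2, a1, a0 + (e1 + c2))%N.
Fixpoint stN (k : nat) : tup :=
  match k with 0 => (1, 0, 0, 1, 1, 1, 1)%N | k'.+1 => stepN (stN k') end.

Lemma stN_ok k : stN k = (N.of_nat (size (C3 k)), N.of_nat (size (C3 k.+1)),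
  N.of_nat (size (C3 k.+2)), N.of_nat (size (E k)), N.of_nat (size (E k.+1)),
  N.of_nat (sa k), N.of_nat (sa k.+1)).
Proof.
elim: k => [|k IH]; first by [].
rewrite [stN k.+1]/= IH /stepN sC3S sAS !(sES k.+1) !N_add.
by [].
Qed.

Definition aN k : N := (stN k).1.2.

Lemma aN_ok k : N.of_nat (sa k) = aN k.
Proof. by rewrite /aN stN_ok. Qed.

Definition SN n : N :=
  (foldr N.add 0%N [seq aN k * aN (n - k) | k <- iota 0 n.+1] + 3 * aN n./2)%N.

Definition calDN n : N :=
  if odd n then (32 * 3 ^ N.of_nat ((n - 5) %/ 2))%N else (16 * 3 ^ N.of_nat ((n - 4) %/ 2))%N.

Lemma N_sumn (f : nat -> nat) s :
  N.of_nat (sumn [seq f k | k <- s]) = foldr N.add 0%N [seq N.of_nat (f k) | k <- s].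
Proof. by elim: s => //= k s <-; rewrite N_add. Qed.

Lemma SN_ok n : N.of_nat (Sn n) = SN n.
Proof.
rewrite /Sn /SN N_add N_sumn N_mul aN_ok; congr (_ + _)%N.
by congr foldr; apply: eq_map => k; rewrite N_mul !aN_ok.
Qed.

Lemma calDN_ok n : N.of_nat (2 * calD n) = (2 * calDN n)%N.
Proof.
rewrite N_mul /calD /calDN; case: (odd n).
  by rewrite (N_mulexp (2 ^ 5) 3 _).
by rewrite (N_mulexp (2 ^ 4) 3 _).
Qed.

Lemma small_check : all (fun n => (SN n <? 2 * calDN n)%N) (iota 4 42) = true.
Proof. by vm_compute. Qed.

Lemma small n : 4 <= n -> n < 46 -> Sn n < 2 * calD n.
Proof.
move=> H1 H2; apply: (@ltN (Sn n) (2 * calD n)); rewrite SN_ok calDN_ok.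
by have /allP := small_check; apply; rewrite mem_iota; lia.
Qed.

Theorem mainTheorem12 (n : nat) (hn : 4 <= n) : calP n < calD n.
Proof.
have H := calP_bound n.
have H2 : Sn n < 2 * calD n.
  by case: (ltnP n 46) => Hn; [exact: small | exact: large].
rewrite -(ltn_pmul2l (isT : 0 < 2)); exact: leq_ltn_trans H H2.
Qed.
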